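(* Let $G$ be a finite group, $N$ a normal subgroup of $G$, and $A$, $B$ conjugacy classes of $G$. Suppose there exist $a\in A$ and $b\in B$ such that $AB\subseteq ab\,\mathbf{Z}(N)$. Then $\mathbf{C}_N(A)\cap\mathbf{C}_N(B)\supseteq [N,N]$. In particular $\operatorname{dl}(N/\mathbf{C}_N(A))\le 1$.
   Context: $AB=\{xy\mid x\in A,y\in B\}$; $ab\,\mathbf{Z}(N)=\{abz\mid z\in\mathbf{Z}(N)\}$ where $\mathbf{Z}(N)$ is the center of $N$. For a subset $X\subseteq G$, $\mathbf{C}_N(X)=\{n\in N\mid n^{-1}xn=x\text{ for all }x\in X\}$. $[N,N]$ is the derived subgroup of $N$ and $\operatorname{dl}$ denotes derived length. *)

(* Defs.v *)
From mathcomp Require Import all_boot all_fingroup all_solvable.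

(* Main.v *)
Require Import Defs.
From mathcomp Require Import all_boot all_fingroup all_solvable.
Set Implicit Arguments. Unset Strict Implicit. Unset Printing Implicit Defensive.
Local Open Scope group_scope.

Section S.
Variable gT : finGroupType.
Implicit Types (x y c n m : gT) (Z N G : {group gT}) (A : {set gT}).

Lemma keyA Z x y n c : y \in 'N(Z) -> x * y \in c *: Z -> (x ^ n) * y \in c *: Z ->
  [~ x, n] \in Z.
Proof.
move=> nZy; rewrite !mem_lcoset => h1 h2.
have := groupM (groupVr h1) h2.
rewrite -(memJ_norm _ (groupVr nZy)).
suff -> : (c^-1 * (x * y))^-1 * (c^-1 * (x ^ n * y)) = [~ x, n] ^ y by rewrite conjgK.
by rewrite commgEl !invMg !invgK !mulgA mulgK conjgE !mulgA.
Qed.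

Lemma keyB Z x y n c : x * y \in c *: Z -> x * (y ^ n) \in c *: Z -> [~ y, n] \in Z.
Proof.
rewrite !mem_lcoset => h1 h2.
have := groupM (groupVr h1) h2.
by rewrite commgEl !invMg !invgK !mulgA mulgK mulgKV.
Qed.

Lemma cent_comm N x n m : (forall k, k \in N -> [~ x, k] \in 'Z(N)) ->
  n \in N -> m \in N -> commute x [~ n, m].
Proof.
move=> hZ Nn Nm.
have hc : forall k l, k \in N -> l \in N -> x ^ (k * l) = x ^ (l * k).
  move=> k l Nk Nl.
  have /centerP [_ ck] := hZ k Nk; have /centerP [_ cl] := hZ l Nl.
  have ek : x ^ k = x * [~ x, k] by rewrite conjg_mulR.
  have el : x ^ l = x * [~ x, l] by rewrite conjg_mulR.
  have ckl : [~ x, k] ^ l = [~ x, k] by apply/conjg_fixP/commgP; apply: ck.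
  have clk : [~ x, l] ^ k = [~ x, l] by apply/conjg_fixP/commgP; apply: cl.
  have cc : commute [~ x, k] [~ x, l] by apply: ck; case/centerP: (hZ l Nl).
  by rewrite !conjgM ek conjMg ckl el conjMg ek clk -[RHS]mulgA (cc : _ = _) [RHS]mulgA.
have := hc _ _ (groupVr Nn) (groupVr Nm).
move=> e; apply/commgP/conjg_fixP.
have -> : [~ n, m] = (n^-1 * m^-1) * (n * m) by rewrite commgEl !mulgA.
rewrite conjgM e -conjgM -invMg mulVg conjg1 //.
Qed.

Lemma class_facts G A x g : A \in classes G -> x \in A -> g \in G -> x \in G /\ x ^ g \in A.
Proof.
move=> /repr_classesP [rG ->] /imsetP [h Gh ->] Gg; split; first exact: groupJ.
by rewrite -conjgM; apply: memJ_class; apply: groupM.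
Qed.
End S.

Theorem lemma3p2 (gT : finGroupType) (G N : {group gT}) (A B : {set gT})
    (a b : gT) :
  N <| G -> A \in classes G -> B \in classes G ->
  a \in A -> b \in B ->
  A * B \subset (a * b) *: 'Z(N) ->
  [~: N, N] \subset 'C_N(A) :&: 'C_N(B) /\
  (N / 'C_N(A))^`(1) = 1.
Proof.
move=> nNG cA cB aA bB sAB.
have sNG := normal_sub nNG.
have nZG : G \subset 'N('Z(N)) := char_norm_trans (center_char N) (normal_norm nNG).
have hA : forall x, x \in A -> forall k, k \in N -> [~ x, k] \in 'Z(N).
  move=> x xA k Nk.
  have [Gx xkA] := class_facts cA xA (subsetP sNG k Nk).
  have [Gb _] := class_facts cB bB (group1 G).
  apply: (@keyA _ _ x b k (a * b)).
  - exact: (subsetP nZG).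
  - by apply: (subsetP sAB); apply: mem_mulg.
  - by apply: (subsetP sAB); apply: mem_mulg.
have hB : forall y, y \in B -> forall k, k \in N -> [~ y, k] \in 'Z(N).
  move=> y yB k Nk.
  have [Gy ykB] := class_facts cB yB (subsetP sNG k Nk).
  apply: (@keyB _ _ a y k (a * b)).
  - by apply: (subsetP sAB); apply: mem_mulg.
  - by apply: (subsetP sAB); apply: mem_mulg.
have part1 : [~: N, N] \subset 'C_N(A) :&: 'C_N(B).
  rewrite gen_subG; apply/subsetP => _ /imset2P [n m Nn Nm ->].
  rewrite !inE groupR //=; apply/andP; split; apply/centP => y yX; apply: esym.
    exact: cent_comm (hA y yX) Nn Nm.
  exact: cent_comm (hB y yX) Nn Nm.
split=> //.
apply/derG1P; apply: sub_der1_abelian.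
by rewrite derg1; apply: subset_trans part1 (subsetIl _ _).
Qed.
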